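(* Let $A=(a_{kl})$ be an $n\times n$ matrix with entries in $\{0,1,2,\dots\}\cup\{\infty\}$ and no zeros on the diagonal. Let $i\neq j$ be indices with $a_{ji}\neq 0$. Let $A'$ be obtained from $A$ by replacing column $i$ with $(a_{1i}+a_{1j},\dots,a_{ni}+a_{nj})^T$ and then subtracting $1$ from the $(j,i)$ entry, so that the new $(j,i)$ entry is $a_{ji}+a_{jj}-1$. All other columns are unchanged. Then $A\sim_M A'$. Moreover: - $A'$ has no zeros on the diagonal; - if $A$ is irreducible, so is $A'$; - if the top-left $m\times m$ corner of $A$ is irreducible, so is the top-left $m\times m$ corner of $A'$.
   Context: Arithmetic conventions: $\infty+a=\infty$ and $\infty-1=\infty$. For a finite index set $X$ and an $X\times X$ matrix $A$ with entries in $\{0,1,2,\dots\}\cup\{\infty\}$, $G_A$ is the graph with vertex set $X$ and exactly $A(x,y)$ edges from $x$ to $y$. A matrix $A$ is irreducible if $G_A$ is strongly connected. For matrices, $A\sim_M B$ means $G_A\sim_M G_B$. A graph $G=(G^0,G^1,r,s)$ may have multiple edges and loops. A source receives no edges, a sink emits no edges, and an infinite emitter emits infinitely many edges. A vertex is singular if it is a sink or infinite emitter, and regular otherwise. Move-equivalence $\sim_M$ is the smallest equivalence relation on graphs with finitely many vertices such that $G\sim_M E$ whenever $E$ is isomorphic to a graph obtained from $G$ by one of the following moves. (S) Delete a regular source together with the edges it emits. (R) For a regular vertex $u$ emitting exactly one edge $f$, with $r(f)\neq u$, and all of whose incoming edges have the same source $v$: delete $u$, $f$ and the edges into $u$, and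 add for each $e\in r^{-1}(u)$ an edge $[ef]$ from $v$ to $r(f)$. (O) Out-splitting at a non-sink $v$ along a partition $\mathcal E_1,\dots,\mathcal E_n$ of $s^{-1}(v)$ with at most one infinite part. Replace $v$ by $v^1,\dots,v^n$. Each edge $e$ into $v$ becomes copies $e^1,\dots,e^n$ with $r(e^i)=v^i$ and source $s(e)$, or source $v^j$ if $s(e)=v$ and $e\in\mathcal E_j$. An edge from $v$ to $w\neq v$ lying in $\mathcal E_i$ gets source $v^i$. (I) In-splitting at a regular non-source $v$ along a partition $\mathcal E_1,\dots,\mathcal E_n$ of $r^{-1}(v)$. Replace $v$ by $v^1,\dots,v^n$. Each edge $e$ out of $v$ becomes copies $e^1,\dots,e^n$ with $s(e^i)=v^i$ and range $r(e)$, or range $v^j$ if $r(e)=v$ and $e\in\mathcal E_j$. An edge into $v$ from $w\neq v$ lying in $\mathcal E_i$ gets range $v^i$. *)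

(* Defs.v *)
From HB Require Import structures.
From mathcomp Require Import all_boot.
From Stdlib Require Import Relations.Relation_Operators.
From Stdlib Require List.

Set Implicit Arguments.
Unset Strict Implicit.
Unset Printing Implicit Defensive.

Record graph : Type := Graph {
  gV : finType;
  gE : Type;
  src : gE -> gV;
  rng : gE -> gV }.
Arguments src {g} _.
Arguments rng {g} _.

Definition is_sink (G : graph) (v : gV G) := forall e : gE G, src e <> v.
Definition is_source (G : graph) (v : gV G) := forall e : gE G, rng e <> v.
Definition fin_emits (G : graph) (v : gV G) :=
  exists l : list (gE G), forall e, src e = v -> List.In e l.
Definition regular (G : graph) (v : gV G) := ~ is_sink v /\ fin_emits v.

(* A "presented" graph: vertices = {w : pW | pP w}, edges pY, with maps into pW. *)
Record pres : Type := Pres {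
  pW : finType;
  pP : pred pW;
  pY : Type;
  psrc : pY -> pW;
  prng : pY -> pW }.
Arguments pP : clear implicits.
Arguments psrc {p} _.
Arguments prng {p} _.

Definition iso_pres (E : graph) (X : pres) :=
  exists (f0 : pW X -> gV E) (f1 : pY X -> gE E),
    (forall y, pP X (psrc y) && pP X (prng y)) /\
    (forall w1 w2, pP X w1 -> pP X w2 -> f0 w1 = f0 w2 -> w1 = w2) /\
    (forall x : gV E, exists2 w, pP X w & f0 w = x) /\
    bijective f1 /\
    (forall y, src (f1 y) = f0 (psrc y)) /\
    (forall y, rng (f1 y) = f0 (prng y)).

Definition del_pres (G : graph) (v : gV G) : pres :=
  @Pres (gV G) (fun x => x != v)
    {e : gE G | (src e != v) && (rng e != v)}
    (fun e => src (proj1_sig e)) (fun e => rng (proj1_sig e)).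

(* (R): delete u, f and edges into u; add [ef] from s(e) (= v) to r(f). *)
Definition R_pres (G : graph) (u : gV G) (f : gE G) : pres :=
  @Pres (gV G) (fun x => x != u)
    ({e : gE G | (src e != u) && (rng e != u)} + {e : gE G | rng e == u})%type
    (fun y => match y with inl e => src (proj1_sig e) | inr e => src (proj1_sig e) end)
    (fun y => match y with inl e => rng (proj1_sig e) | inr _ => rng f end).

Definition osplit_pres (G : graph) (v : gV G) (n : nat) (p : gE G -> 'I_n) : pres :=
  let smap (e : gE G) : (gV G + 'I_n)%type :=
    if src e == v then inr (p e) else inl (src e) in
  @Pres (gV G + 'I_n)%type
    (fun w => match w with inl x => x != v | inr _ => true end)
    ({e : gE G | rng e != v} + ({e : gE G | rng e == v} * 'I_n))%type
    (fun y => match y with inl e => smap (proj1_sig e)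
                         | inr (e, _) => smap (proj1_sig e) end)
    (fun y => match y with inl e => inl (rng (proj1_sig e))
                         | inr (_, i) => inr i end).

Definition isplit_pres (G : graph) (v : gV G) (n : nat) (q : gE G -> 'I_n) : pres :=
  let rmap (e : gE G) : (gV G + 'I_n)%type :=
    if rng e == v then inr (q e) else inl (rng e) in
  @Pres (gV G + 'I_n)%type
    (fun w => match w with inl x => x != v | inr _ => true end)
    ({e : gE G | src e != v} + ({e : gE G | src e == v} * 'I_n))%type
    (fun y => match y with inl e => inl (src (proj1_sig e))
                         | inr (_, i) => inr i end)
    (fun y => match y with inl e => rmap (proj1_sig e)
                         | inr (e, _) => rmap (proj1_sig e) end).

(* p : gE G -> 'I_n restricted to S is a partition of S into n nonempty parts *)
Definition part_nonempty (G : graph) (S : gE G -> Prop) (n : nat) (p : gE G -> 'I_n) :=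
  forall i : 'I_n, exists e, S e /\ p e = i.
Definition part_finite (G : graph) (S : gE G -> Prop) (n : nat) (p : gE G -> 'I_n)
  (i : 'I_n) := exists l : list (gE G), forall e, S e -> p e = i -> List.In e l.
Definition at_most_one_infinite (G : graph) (S : gE G -> Prop) (n : nat)
  (p : gE G -> 'I_n) :=
  forall i j : 'I_n, i <> j -> part_finite S p i \/ part_finite S p j.

Definition moveS (G E : graph) :=
  exists v : gV G, regular v /\ is_source v /\ iso_pres E (del_pres v).

Definition moveR (G E : graph) :=
  exists (u : gV G) (f : gE G) (v : gV G),
    regular u /\ (forall e, src e = u <-> e = f) /\ rng f <> u /\
    (forall e, rng e = u -> src e = v) /\ iso_pres E (R_pres u f).

Definition moveO (G E : graph) :=
  exists (v : gV G) (n : nat) (p : gE G -> 'I_n),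
    ~ is_sink v /\
    part_nonempty (fun e => src e = v) p /\
    at_most_one_infinite (fun e => src e = v) p /\
    iso_pres E (osplit_pres v p).

Definition moveI (G E : graph) :=
  exists (v : gV G) (n : nat) (q : gE G -> 'I_n),
    regular v /\ ~ is_source v /\
    part_nonempty (fun e => rng e = v) q /\
    iso_pres E (isplit_pres v q).

Definition move (G E : graph) := moveS G E \/ moveR G E \/ moveO G E \/ moveI G E.

Definition move_equiv : graph -> graph -> Prop := clos_refl_sym_trans graph move.

Definition strongly_connected (G : graph) :=
  forall x y : gV G,
    clos_refl_trans (gV G) (fun a b => exists e : gE G, src e = a /\ rng e = b) x y.

Inductive enat := Fin of nat | Inf.

Definition eadd (a b : enat) : enat :=
  match a, b with Fin x, Fin y => Fin (x + y) | _, _ => Inf end.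
Definition esub1 (a : enat) : enat :=
  match a with Fin x => Fin x.-1 | Inf => Inf end.
Definition elt (k : nat) (a : enat) : bool :=
  match a with Fin x => k < x | Inf => true end.

(* G_A : exactly A x y edges from x to y (countably many if A x y = ∞) *)
Definition mgraph (n : nat) (A : 'I_n -> 'I_n -> enat) : graph :=
  @Graph 'I_n {t : 'I_n * 'I_n * nat | elt t.2 (A t.1.1 t.1.2)}
    (fun t => (proj1_sig t).1.1) (fun t => (proj1_sig t).1.2).

Definition mequiv (n m : nat) (A : 'I_n -> 'I_n -> enat) (B : 'I_m -> 'I_m -> enat) :=
  move_equiv (mgraph A) (mgraph B).

Definition irreducible (n : nat) (A : 'I_n -> 'I_n -> enat) :=
  strongly_connected (mgraph A).

Definition corner (n m : nat) (hm : m <= n) (A : 'I_n -> 'I_n -> enat) :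
  'I_m -> 'I_m -> enat :=
  fun k l => A (widen_ord hm k) (widen_ord hm l).

Definition col_add_move (n : nat) (A : 'I_n -> 'I_n -> enat) (i j : 'I_n) :
  'I_n -> 'I_n -> enat :=
  fun k l => if l == i then
               (if k == j then esub1 (eadd (A k i) (A k j)) else eadd (A k i) (A k j))
             else A k l.

(* Main.v *)
Require Import Defs.
From mathcomp Require Import all_boot zify.
From Stdlib Require Import Relations.Relation_Operators ClassicalEpsilon.
From Stdlib Require List.
Set Implicit Arguments. Unset Strict Implicit. Unset Printing Implicit Defensive.

Definition mg (V : finType) (M : V -> V -> enat) : graph :=
  @Graph V {t : V * V * nat | elt t.2 (M t.1.1 t.1.2)}
    (fun t => (proj1_sig t).1.1) (fun t => (proj1_sig t).1.2).

Definition equi (T U : Type) := exists f : T -> U, bijective f.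
Definition ec (T : Type) (a : enat) := equi T {c : nat | elt c a}.

Lemma bij_of (T U : Type) (f : T -> U) :
  injective f -> (forall u, exists t, f t = u) -> bijective f.
Proof.
move=> fi fs.
pose g u := proj1_sig (constructive_indefinite_description _ (fs u)).
exists g => [t|u]; rewrite /g; case: constructive_indefinite_description => //= t' h.
exact: fi.
Qed.

Lemma equi_refl T : equi T T.
Proof. by exists id; exists id. Qed.
Lemma equi_sym T U : equi T U -> equi U T.
Proof. case=> f [g fg gf]; exists g; by exists f. Qed.
Lemma equi_trans T U W : equi T U -> equi U W -> equi T W.
Proof.
case=> f [g fg gf] [h [k hk kh]]; exists (h \o f); exists (g \o k) => x /=.
  by rewrite hk fg. by rewrite gf kh.
Qed.
Lemma ec_equi T U a : equi T U -> ec U a -> ec T a.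
Proof. exact: equi_trans. Qed.

Lemma equi_sum T1 T2 U1 U2 : equi T1 U1 -> equi T2 U2 -> equi (T1 + T2) (U1 + U2).
Proof.
case=> f [g fg gf] [h [k hk kh]].
exists (fun z => match z with inl a => inl (f a) | inr b => inr (h b) end).
exists (fun z => match z with inl a => inl (g a) | inr b => inr (k b) end).
  by case=> x /=; rewrite ?fg ?hk. by case=> x /=; rewrite ?gf ?kh.
Qed.

Lemma ec_empty T : (T -> False) -> ec T (Fin 0).
Proof.
move=> hT; exists (fun t => match hT t with end).
have h0 : {c | elt c (Fin 0)} -> T by case=> c; rewrite /= ltn0.
exists h0; first by move=> t; case: (hT t).
by case=> c hc; exfalso; move: hc; rewrite /= ltn0.
Qed.

Lemma ec_one T (t0 : T) : (forall t, t = t0) -> ec T (Fin 1).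
Proof.
move=> h; exists (fun _ => exist (fun c => elt c (Fin 1)) 0 isT).
exists (fun _ => t0) => [t|c]; first by rewrite (h t).
by apply: val_inj; case: c => [[|c] hc].
Qed.

Lemma ec_sum_base a b :
  equi ({c : nat | elt c a} + {c : nat | elt c b}) {c : nat | elt c (eadd a b)}.
Proof.
case: a => [x|]; case: b => [y|].
- have h1 c : elt c (Fin x) -> elt c (eadd (Fin x) (Fin y)).
    by rewrite /= => /leq_trans; apply; rewrite leq_addr.
  have h2 c : elt c (Fin y) -> elt (x + c) (eadd (Fin x) (Fin y)).
    by rewrite /= ltn_add2l.
  exists (fun z => match z with inl c => exist _ (val c) (h1 _ (valP c))
                   | inr c => exist _ (x + val c) (h2 _ (valP c)) end).
  apply: bij_of.
    case=> [[c hc]|[c hc]] [[d hd]|[d hd]] /= /(congr1 val) /= E.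
    - by congr inl; apply: val_inj.
    - by exfalso; move: hc; rewrite /= E ltnNge leq_addr.
    - by exfalso; move: hd; rewrite /= -E ltnNge leq_addr.
    - by congr inr; apply: val_inj; apply/eqP; rewrite /= -(eqn_add2l x) E.
  case=> c hc; case: (ltnP c x) => cx.
    by exists (inl (exist (fun c => elt c (Fin x)) c cx)); apply: val_inj.
  have hy : elt (c - x) (Fin y) by rewrite /= ltn_subLR.
  by exists (inr (exist (fun c => elt c (Fin y)) _ hy)); apply: val_inj => /=; rewrite subnKC.
- exists (fun z => match z with inl c => exist (fun c => elt c (eadd (Fin x) Inf)) (val c) isT
                   | inr c => exist _ (x + val c) isT end).
  apply: bij_of.
    case=> [[c hc]|[c hc]] [[d hd]|[d hd]] /= /(congr1 val) /= E.
    - by congr inl; apply: val_inj.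
    - by exfalso; move: hc; rewrite /= E ltnNge leq_addr.
    - by exfalso; move: hd; rewrite /= -E ltnNge leq_addr.
    - by congr inr; apply: val_inj; apply/eqP; rewrite /= -(eqn_add2l x) E.
  case=> c hc; case: (ltnP c x) => cx.
    by exists (inl (exist (fun c => elt c (Fin x)) c cx)); apply: val_inj.
  by exists (inr (exist (fun c => elt c Inf) (c - x) isT)); apply: val_inj => /=; rewrite subnKC.
- exists (fun z => match z with inr c => exist (fun c => elt c (eadd Inf (Fin y))) (val c) isT
                   | inl c => exist _ (y + val c) isT end).
  apply: bij_of.
    case=> [[c hc]|[c hc]] [[d hd]|[d hd]] /= /(congr1 val) /= E.
    - by congr inl; apply: val_inj; apply/eqP; rewrite /= -(eqn_add2l y) E.
    - by exfalso; move: hd; rewrite /= -E ltnNge leq_addr.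
    - by exfalso; move: hc; rewrite /= E ltnNge leq_addr.
    - by congr inr; apply: val_inj.
  case=> c hc; case: (ltnP c y) => cy.
    by exists (inr (exist (fun c => elt c (Fin y)) c cy)); apply: val_inj.
  by exists (inl (exist (fun c => elt c Inf) (c - y) isT)); apply: val_inj => /=; rewrite subnKC.
- exists (fun z => match z with inl c => exist (fun c => elt c (eadd Inf Inf)) (val c).*2 isT
                   | inr c => exist _ (val c).*2.+1 isT end).
  apply: bij_of.
    case=> [[c hc]|[c hc]] [[d hd]|[d hd]] /= /(congr1 val) /= E.
    - by congr inl; apply: val_inj => /=; apply: double_inj.
    - by exfalso; move: (congr1 odd E); rewrite /= !odd_double.
    - by exfalso; move: (congr1 odd E); rewrite /= !odd_double.
    - by congr inr; apply: val_inj => /=; apply: double_inj; case: E.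
  case=> c hc; case O: (odd c).
    exists (inr (exist (fun c => elt c Inf) c./2 isT)); apply: val_inj => /=.
    by rewrite -[RHS]odd_double_half O.
  exists (inl (exist (fun c => elt c Inf) c./2 isT)); apply: val_inj => /=.
  by rewrite -[RHS]odd_double_half O.
Qed.

Lemma ec_sum T U a b : ec T a -> ec U b -> ec (T + U) (eadd a b).
Proof. move=> h1 h2; apply: equi_trans (ec_sum_base a b); exact: equi_sum. Qed.


Lemma ec_char T a (v : T -> nat) :
  injective v -> (forall t, elt (v t) a) -> (forall d, elt d a -> exists t, v t = d) ->
  ec T a.
Proof.
move=> vi va vs; exists (fun t => exist _ (v t) (va t)); apply: bij_of.
  by move=> t t' /(congr1 val) /= /vi.
by case=> d hd; case: (vs d hd) => t ht; exists t; apply: val_inj.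
Qed.

Lemma ec_val T a : ec T a -> exists v : T -> nat,
  [/\ injective v, (forall t, elt (v t) a) & (forall d, elt d a -> exists t, v t = d)].
Proof.
case=> g [h gh hg]; exists (fun t => sval (g t)); split.
- by move=> t t' /val_inj /(can_inj gh).
- by move=> t; case: (g t).
- by move=> d hd; exists (h (exist _ d hd)); rewrite hg.
Qed.

Lemma ec_rem (T : eqType) a (t0 : T) : ec T a -> ec {t : T | t != t0} (esub1 a).
Proof.
case/ec_val=> v [vi va vs].
pose c0 := v t0.
pose w (t : {t : T | t != t0}) := let c := v (val t) in if c < c0 then c else c.-1.
have ne t : t != t0 -> v t != c0 by move=> ht; apply: contra ht => /eqP /vi ->.
apply: (@ec_char _ _ w).
- move=> [t ht] [t' ht'] /=; rewrite /w /=.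
  have /eqP n1 := ne _ ht; have /eqP n2 := ne _ ht'.
  move=> E; apply: val_inj => /=; apply: vi.
  by move: E; case: ifP => H1; case: ifP => H2; lia.
- move=> [t ht]; rewrite /w /=; move: (va t) (va t0) (ne _ ht); rewrite -/c0.
  case: a vs va => [x|] //= vs va h1 h2 /eqP h3.
  by case: ifP => H; lia.
- move=> d hd.
  case: (ltnP d c0) => dc.
    have hd' : elt d a.
      case: a vs va hd => [x|] // vs va /= hd; apply: ltn_trans dc _; exact: va.
    case: (vs d hd') => t ht.
    have htn : t != t0 by apply: contraTneq dc => E; rewrite -ht E ltnn.
    by exists (exist _ t htn); rewrite /w /= ht dc.
  have hd' : elt d.+1 a by case: a vs va hd => [x|] //= _ _; lia.
  case: (vs _ hd') => t ht.
  have htn : t != t0 by apply: contraTneq dc => E; rewrite /c0 -E ht -ltnNge.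
  by exists (exist _ t htn); rewrite /w /= ht ltnNge ltnW.
Qed.

Lemma ec_const T (P : T -> bool) b a :
  (forall t, P t = b) -> ec T a -> ec {t | P t} (if b then a else Fin 0).
Proof.
move=> hP; case: b hP => hP h.
  apply: ec_equi h; exists val; apply: bij_of; first exact: val_inj.
  by move=> t; exists (exist _ t (hP t)).
by apply: ec_empty; case=> t; rewrite hP.
Qed.

Lemma equi_sig_ext T (P Q : T -> bool) : (forall t, P t = Q t) -> equi {t | P t} {t | Q t}.
Proof.
move=> h; exists (fun t => exist Q (val t) (etrans (esym (h _)) (valP t))); apply: bij_of.
  by move=> [t ?] [t' ?] /(congr1 val) /= E; apply: val_inj.
by case=> t ht; exists (exist _ t (etrans (h t) ht)); apply: val_inj.
Qed.

Lemma equi_sig_sum T1 T2 (P : T1 + T2 -> bool) :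
  equi {z | P z} ({a | P (inl a)} + {b | P (inr b)}).
Proof.
pose F (z : {z | P z}) : ({a | P (inl a)} + {b | P (inr b)})%type :=
  match z with exist (inl a) h => inl (exist (fun a => P (inl a)) a h)
             | exist (inr b) h => inr (exist (fun b => P (inr b)) b h) end.
exists F; apply: bij_of.
  case=> [[a|a] ha] [[b|b] hb] //= E; apply: val_inj => /=.
    by move: (congr1 (fun z => match z with inl x => sval x | inr _ => a end) E) => /= ->.
  by move: (congr1 (fun z => match z with inr x => sval x | inl _ => a end) E) => /= ->.
case=> [[a ha]|[b hb]].
  by exists (exist _ (inl a) ha).
by exists (exist _ (inr b) hb).
Qed.

Lemma equi_sig_sig T (Q R : T -> bool) :
  equi {z : {e | Q e} | R (sval z)} {e | Q e && R e}.
Proof.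
exists (fun z => exist _ (val (val z)) (introT andP (conj (valP (val z)) (valP z))));
apply: bij_of.
  case=> [[e h1] h2] [[e' h1'] h2'] /= E; have /= E' := congr1 sval E.
  by apply: val_inj; apply: val_inj.
case=> e h; case/andP: (h) => h1 h2; exists (exist _ (exist _ e h1) h2); exact: val_inj.
Qed.

Lemma equi_sig_prod T k (P : T -> bool) (a : 'I_k) :
  equi {z : T * 'I_k | P z.1 && (z.2 == a)} {e | P e}.
Proof.
exists (fun z : {z : T * 'I_k | P z.1 && (z.2 == a)} => exist P (sval z).1 (proj1 (andP (valP z)))); apply: bij_of.
  case=> [[e b] h] [[e' b'] h'] /= E0; have /= E := congr1 sval E0; apply: val_inj => /=.
  have hb : b = a by case/andP: (h) => _ /eqP.
  have hb' : b' = a by case/andP: (h') => _ /eqP.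
  by rewrite E hb hb'.
case=> e h; exists (exist _ (e, a) (introT andP (conj h (eqxx a)))); exact: val_inj.
Qed.

Lemma ec_sig_false T (P : T -> bool) : (forall t, P t = false) -> ec {t | P t} (Fin 0).
Proof. by move=> h; apply: ec_empty; case=> t; rewrite h. Qed.


Definition fib (G : graph) (x y : gV G) := {e : gE G | (src e == x) && (rng e == y)}.
Definition pfib (X : pres) (w1 w2 : pW X) := {e : pY X | (psrc e == w1) && (prng e == w2)}.

Lemma ec_mg (V : finType) (M : V -> V -> enat) x y : ec (@fib (mg M) x y) (M x y).
Proof.
apply: (@ec_char _ _ (fun e => (sval (sval e)).2)).
- case=> [[[[x1 y1] c] h] hh]; case/andP: (hh) => /= /eqP E1 /eqP E2.
  case=> [[[[x2 y2] c'] h'] hh']; case/andP: (hh') => /= /eqP E3 /eqP E4 /= E.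
  by apply: val_inj; apply: val_inj => /=; rewrite E1 E2 E3 E4 E.
- case=> [[[[x1 y1] c] h] hh]; case/andP: (hh) => /= /eqP E1 /eqP E2; clear hh; move: h => /=.
  by rewrite E1 E2.
- move=> d hd.
  exists (exist (fun e : gE (mg M) => (src e == x) && (rng e == y))
            (exist (fun t : V * V * nat => elt t.2 (M t.1.1 t.1.2)) (x, y, d) hd)
            (introT andP (conj (eqxx x) (eqxx y)))).
  by [].
Qed.

Lemma iso_fib (V : finType) (M : V -> V -> enat) (X : pres) (f0 : pW X -> V)
  (hP : forall y, pP X (psrc y) && pP X (prng y))
  (hinj : forall w1 w2, pP X w1 -> pP X w2 -> f0 w1 = f0 w2 -> w1 = w2)
  (hsurj : forall x : V, exists2 w, pP X w & f0 w = x)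
  (hfib : forall w1 w2, pP X w1 -> pP X w2 -> ec (pfib w1 w2) (M (f0 w1) (f0 w2))) :
  iso_pres (mg M) X.
Proof.
have G w1 w2 : exists g : pfib w1 w2 -> {c | elt c (M (f0 w1) (f0 w2))},
    pP X w1 -> pP X w2 -> bijective g.
  case: (boolP (pP X w1 && pP X w2)) => [/andP [h1 h2]|H].
    by case: (hfib _ _ h1 h2) => g hg; exists g.
  have F : pfib w1 w2 -> False.
    case=> y /andP [/eqP E1 /eqP E2]; move: (hP y); rewrite E1 E2; by rewrite (negbTE H).
  by exists (fun z => match F z with end) => h1 h2; rewrite h1 h2 in H.
pose g w1 w2 := proj1_sig (constructive_indefinite_description _ (G w1 w2)).
have gb w1 w2 : pP X w1 -> pP X w2 -> bijective (g w1 w2).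
  by rewrite /g; case: constructive_indefinite_description.
pose f1 (y : pY X) : gE (mg M) :=
  let c := g (psrc y) (prng y)
     (exist (fun e => (psrc e == psrc y) && (prng e == prng y)) y
        (introT andP (conj (eqxx (psrc y)) (eqxx (prng y))))) in
  exist (fun t : V * V * nat => elt t.2 (M t.1.1 t.1.2))
     (f0 (psrc y), f0 (prng y), sval c) (valP c).
have f1E w1 w2 y (h : (psrc y == w1) && (prng y == w2)) :
    sval (f1 y) = (f0 w1, f0 w2, sval (g w1 w2 (exist _ y h))).
  have /andP [/eqP E1 /eqP E2] := h; subst w1 w2.
  by rewrite /f1 /= (bool_irrelevance h (introT andP (conj (eqxx (psrc y)) (eqxx (prng y))))).
exists f0, f1; split; first exact: hP.
split; first exact: hinj. split; first exact: hsurj.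
split; last by split.
apply: bij_of.
  move=> y y' E.
  have /andP [p1 p2] := hP y; have /andP [p1' p2'] := hP y'.
  have h : (psrc y == psrc y) && (prng y == prng y) by rewrite !eqxx.
  have E0 := f1E _ _ _ h.
  move: (E0); rewrite E /f1 /= => [[E1 E2 _]].
  have {}E1 := hinj _ _ p1' p1 E1; have {}E2 := hinj _ _ p2' p2 E2.
  have h' : (psrc y' == psrc y) && (prng y' == prng y) by rewrite E1 E2 !eqxx.
  have E0' := f1E _ _ _ h'.
  rewrite E E0' in E0; case: E0 => E3.
  have := bij_inj (gb _ _ p1 p2) (val_inj E3).
  by move/(congr1 sval).
case=> [[[x1 x2] c] hc].
case: (hsurj x1) => w1 p1 E1; case: (hsurj x2) => w2 p2 E2.
subst x1 x2.
case: (gb _ _ p1 p2) => ginv gK Kg.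
case Ez : (ginv (exist _ c hc)) => [y hy].
exists y; apply: val_inj.
change (sval (f1 y) = (f0 w1, f0 w2, c)). by rewrite (f1E _ _ _ hy) -Ez Kg.
Qed.


Lemma equi_sum_empty_r T U : (U -> False) -> equi (T + U) T.
Proof.
move=> hU; exists (fun z => match z with inl t => t | inr u => match hU u with end end).
by exists inl => [[t|u]|t] //; case: (hU u).
Qed.
Lemma equi_sum_empty_l T U : (T -> False) -> equi (T + U) U.
Proof.
move=> hT; exists (fun z => match z with inr t => t | inl u => match hT u with end end).
by exists inr => [[u|t]|t] //; case: (hT u).
Qed.
Lemma sig_empty T (P : T -> bool) : (forall t, P t = false) -> {t | P t} -> False.
Proof. by move=> h [t]; rewrite h. Qed.

Ltac bsolve := rewrite /=; repeat (match goal with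
   | |- context [if ?a == ?b then _ else _] =>
   let H := fresh "H" in case: (@eqP _ a b) => H; [try (injection H; clear H; intro H); try subst|]
   | |- context [?a == ?b] =>
   let H := fresh "H" in case: (@eqP _ a b) => H; [try (injection H; clear H; intro H); try subst|] end);
   rewrite /= ?andbT ?andbF //.

Section G.
Variable G : graph.

Lemma pfib_del (v : gV G) w1 w2 : w1 != v -> w2 != v ->
  equi (@pfib (del_pres v) w1 w2) (fib w1 w2).
Proof.
move=> h1 h2; rewrite /pfib /=. apply: equi_trans (@equi_sig_sig _ (fun e : gE G => (src e != v) && (rng e != v)) (fun e => (src e == w1) && (rng e == w2))) _.
apply: equi_sig_ext => e /=.
by move: h1 h2; bsolve.
Qed.

Lemma pfib_R (u : gV G) f w1 w2 : w1 != u -> w2 != u ->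
  equi (@pfib (R_pres u f) w1 w2) (fib w1 w2 + {e : fib w1 u | rng f == w2}).
Proof.
move=> h1 h2; apply: equi_trans (equi_sig_sum _) _; apply: equi_sum.
  apply: equi_trans (@equi_sig_sig _ (fun e : gE G => (src e != u) && (rng e != u))
     (fun e => (src e == w1) && (rng e == w2))) _.
  apply: equi_sig_ext => e /=.
  by move: h1 h2; bsolve.
apply: equi_trans (@equi_sig_sig _ (fun e : gE G => rng e == u)
     (fun e => (src e == w1) && (rng f == w2))) _.
apply: equi_sym.
apply: equi_trans (@equi_sig_sig _ (fun e : gE G => (src e == w1) && (rng e == u))
     (fun e => (rng f == w2))) _.
apply: equi_sig_ext => e /=.
by bsolve.
Qed.

Variables (v : gV G) (k : nat) (q : gE G -> 'I_k).
Let rmap (e : gE G) : (gV G + 'I_k)%type :=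
    if rng e == v then inr (q e) else inl (rng e).

Lemma pfib_I11 x y : x != v -> y != v ->
  equi (@pfib (isplit_pres v q) (inl x) (inl y)) (fib x y).
Proof.
move=> h1 h2; rewrite /pfib /=; apply: equi_trans (equi_sig_sum _) _.
apply: equi_trans (equi_sum_empty_r _ _) _; first by case=> [[[e he] i]].
apply: equi_trans (@equi_sig_sig _ (fun e : gE G => (src e != v))
     (fun e => (inl (src e) == inl x :> (gV G + 'I_k)%type) && (rmap e == inl y))) _.
apply: equi_sig_ext => e /=; rewrite /rmap.
by move: h1 h2; bsolve.
Qed.

Lemma pfib_I12 x a : x != v ->
  equi (@pfib (isplit_pres v q) (inl x) (inr a)) {e : fib x v | q (sval e) == a}.
Proof.
move=> h1; rewrite /pfib /=; apply: equi_trans (equi_sig_sum _) _.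
apply: equi_trans (equi_sum_empty_r _ _) _; first by case=> [[[e he] i]].
apply: equi_trans (@equi_sig_sig _ (fun e : gE G => (src e != v))
     (fun e => (inl (src e) == inl x :> (gV G + 'I_k)%type) && (rmap e == inr a))) _.
apply: equi_sym.
apply: equi_trans (@equi_sig_sig _ (fun e : gE G => (src e == x) && (rng e == v))
     (fun e => (q e == a))) _.
apply: equi_sig_ext => e /=; rewrite /rmap.
by move: h1; bsolve.
Qed.

Lemma pfib_I21 a y : y != v ->
  equi (@pfib (isplit_pres v q) (inr a) (inl y)) (fib v y).
Proof.
move=> h2; rewrite /pfib /=; apply: equi_trans (equi_sig_sum _) _.
apply: equi_trans (equi_sum_empty_l _ _) _; first by case=> [[e he]].
apply: (@equi_trans _ {z : ({e : gE G | src e == v} * 'I_k)%type |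
   (rmap (sval z.1) == inl y) && (z.2 == a)}).
  by apply: equi_sig_ext; case=> [[e he] i] /=; rewrite andbC.
apply: equi_trans (@equi_sig_prod _ k (fun e : {e : gE G | src e == v} => rmap (sval e) == inl y) a) _.
apply: equi_trans (@equi_sig_sig _ (fun e : gE G => (src e == v))
     (fun e => (rmap e == inl y))) _.
apply: equi_sig_ext => e /=; rewrite /rmap.
by move: h2; bsolve.
Qed.

Lemma pfib_I22 a b :
  equi (@pfib (isplit_pres v q) (inr a) (inr b)) {e : fib v v | q (sval e) == b}.
Proof.
rewrite /pfib /=; apply: equi_trans (equi_sig_sum _) _.
apply: equi_trans (equi_sum_empty_l _ _) _; first by case=> [[e he]].
apply: (@equi_trans _ {z : ({e : gE G | src e == v} * 'I_k)%type |
   (rmap (sval z.1) == inr b) && (z.2 == a)}).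
  by apply: equi_sig_ext; case=> [[e he] i] /=; rewrite andbC.
apply: equi_trans (@equi_sig_prod _ k (fun e : {e : gE G | src e == v} => rmap (sval e) == inr b) a) _.
apply: equi_trans (@equi_sig_sig _ (fun e : gE G => (src e == v))
     (fun e => (rmap e == inr b))) _.
apply: equi_sym.
apply: equi_trans (@equi_sig_sig _ (fun e : gE G => (src e == v) && (rng e == v))
     (fun e => (q e == b))) _.
apply: equi_sig_ext => e /=; rewrite /rmap.
by bsolve.
Qed.

End G.

Section GO.
Variable G : graph.
Variables (v : gV G) (k : nat) (p : gE G -> 'I_k).
Let smap (e : gE G) : (gV G + 'I_k)%type :=
    if src e == v then inr (p e) else inl (src e).

Lemma pfib_O11 x y : x != v -> y != v ->
  equi (@pfib (osplit_pres v p) (inl x) (inl y)) (fib x y).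
Proof.
move=> h1 h2; rewrite /pfib /=; apply: equi_trans (equi_sig_sum _) _.
apply: equi_trans (equi_sum_empty_r _ _) _; first by case=> [[[e he] i]] /=; rewrite andbF.
apply: equi_trans (@equi_sig_sig _ (fun e : gE G => (rng e != v))
     (fun e => (smap e == inl x) && (inl (rng e) == inl y :> (gV G + 'I_k)%type))) _.
apply: equi_sig_ext => e /=; rewrite /smap.
by move: h1 h2; bsolve.
Qed.

Lemma pfib_O12 x b : x != v ->
  equi (@pfib (osplit_pres v p) (inl x) (inr b)) (fib x v).
Proof.
move=> h1; rewrite /pfib /=; apply: equi_trans (equi_sig_sum _) _.
apply: equi_trans (equi_sum_empty_l _ _) _; first by case=> [[e he]] /=; rewrite andbF.
apply: (@equi_trans _ {z : ({e : gE G | rng e == v} * 'I_k)%type |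
   (smap (sval z.1) == inl x) && (z.2 == b)}).
  by apply: equi_sig_ext; case=> [[e he] i] /=.
apply: equi_trans (@equi_sig_prod _ k (fun e : {e : gE G | rng e == v} => smap (sval e) == inl x) b) _.
apply: equi_trans (@equi_sig_sig _ (fun e : gE G => (rng e == v))
     (fun e => (smap e == inl x))) _.
apply: equi_sig_ext => e /=; rewrite /smap.
by move: h1; bsolve.
Qed.

Lemma pfib_O21 a y : y != v ->
  equi (@pfib (osplit_pres v p) (inr a) (inl y)) {e : fib v y | p (sval e) == a}.
Proof.
move=> h2; rewrite /pfib /=; apply: equi_trans (equi_sig_sum _) _.
apply: equi_trans (equi_sum_empty_r _ _) _; first by case=> [[[e he] i]] /=; rewrite andbF.
apply: equi_trans (@equi_sig_sig _ (fun e : gE G => (rng e != v))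
     (fun e => (smap e == inr a) && (inl (rng e) == inl y :> (gV G + 'I_k)%type))) _.
apply: equi_sym.
apply: equi_trans (@equi_sig_sig _ (fun e : gE G => (src e == v) && (rng e == y))
     (fun e => (p e == a))) _.
apply: equi_sig_ext => e /=; rewrite /smap.
by move: h2; bsolve.
Qed.

Lemma pfib_O22 a b :
  equi (@pfib (osplit_pres v p) (inr a) (inr b)) {e : fib v v | p (sval e) == a}.
Proof.
rewrite /pfib /=; apply: equi_trans (equi_sig_sum _) _.
apply: equi_trans (equi_sum_empty_l _ _) _; first by case=> [[e he]] /=; rewrite andbF.
apply: (@equi_trans _ {z : ({e : gE G | rng e == v} * 'I_k)%type |
   (smap (sval z.1) == inr a) && (z.2 == b)}).
  by apply: equi_sig_ext; case=> [[e he] i] /=.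
apply: equi_trans (@equi_sig_prod _ k (fun e : {e : gE G | rng e == v} => smap (sval e) == inr a) b) _.
apply: equi_trans (@equi_sig_sig _ (fun e : gE G => (rng e == v))
     (fun e => (smap e == inr a))) _.
apply: equi_sym.
apply: equi_trans (@equi_sig_sig _ (fun e : gE G => (src e == v) && (rng e == v))
     (fun e => (p e == a))) _.
apply: equi_sig_ext => e /=; rewrite /smap.
by bsolve.
Qed.
End GO.


Lemma elt0 a : a <> Fin 0 -> elt 0 a.
Proof. by case: a => // [[|x]]. Qed.

Lemma eadd0 a : eadd a (Fin 0) = a.
Proof. by case: a => //= x; rewrite addn0. Qed.

Lemma ec_eq T a b : ec T a -> a = b -> ec T b.
Proof. by move=> h <-. Qed.

Definition medge (V : finType) (M : V -> V -> enat) x y c (h : elt c (M x y)) : gE (mg M) :=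
  exist (fun t : V * V * nat => elt t.2 (M t.1.1 t.1.2)) (x, y, c) h.

Lemma medge_ex (V : finType) (M : V -> V -> enat) x y :
  M x y <> Fin 0 -> exists e : gE (mg M), src e = x /\ rng e = y.
Proof. by move=> h; exists (medge (elt0 h)). Qed.

Lemma medge_nz (V : finType) (M : V -> V -> enat) (e : gE (mg M)) :
  M (src e) (rng e) <> Fin 0.
Proof. by case: e => [[[x y] c] /= h] E; rewrite E in h. Qed.

Section One.
Variables (V : finType) (M : V -> V -> enat) (u w : V).
Hypothesis hrow : forall y, M u y = if y == w then Fin 1 else Fin 0.
Lemma one_hf : elt 0 (M u w). Proof. by rewrite hrow eqxx. Qed.
Definition fone := medge one_hf.

Lemma one_src (e : gE (mg M)) : src e = u <-> e = fone.
Proof.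
split; last by move=> ->.
case: e => [[[x y] c] /= h] E; subst x; apply: val_inj => /=.
move: h; rewrite hrow; case: eqP => [->|] //=; by case: c.
Qed.

Lemma one_regular : regular (u : gV (mg M)).
Proof.
split; first by move=> hs; apply: (hs fone).
by exists [:: fone] => e /one_src ->; left.
Qed.
End One.

Lemma pP_R (G : graph) (u : gV G) f :
  (forall e, src e = u <-> e = f) -> rng f <> u ->
  forall y : pY (R_pres u f), pP (R_pres u f) (psrc y) && pP (R_pres u f) (prng y).
Proof.
move=> h1 h2 [[e /= he]|[e /= he]] //=.
apply/andP; split; last exact/eqP.
apply/eqP => /h1 E; subst e; by move/eqP: he.
Qed.

Lemma pP_del (G : graph) (v : gV G) (y : pY (del_pres v)) :
  pP (del_pres v) (psrc y) && pP (del_pres v) (prng y).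
Proof. by case: y. Qed.

Lemma pP_O (G : graph) (v : gV G) k (p : gE G -> 'I_k) (y : pY (osplit_pres v p)) :
  pP (osplit_pres v p) (psrc y) && pP (osplit_pres v p) (prng y).
Proof.
case: y => [[e he]|[[e he] a]] /=; case: ifP => //= /negbT -> //.
Qed.

Lemma pP_I (G : graph) (v : gV G) k (q : gE G -> 'I_k) (y : pY (isplit_pres v q)) :
  pP (isplit_pres v q) (psrc y) && pP (isplit_pres v q) (prng y).
Proof. by case: y => [[e he]|[[e he] a]] /=; case: ifP => //= H; rewrite ?he ?H. Qed.


Lemma eqSome (T : eqType) (a b : T) : (Some a == Some b) = (a == b).
Proof. by apply/eqP/eqP => [[]|->]. Qed.

Section Main.
Variables (n : nat) (A : 'I_n -> 'I_n -> enat) (i j : 'I_n).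
Hypotheses (hij : i != j) (hji : A j i <> Fin 0) (hjj : A j j <> Fin 0).

Definition base (x : 'I_n) := if x == j then esub1 (A j i) else A x i.

Definition B (S : {set 'I_n}) (X Y : option 'I_n) : enat :=
  match X, Y with
  | Some x, Some y => if y == i then (if x \in S then eadd (base x) (A x j) else base x)
                      else A x y
  | Some x, None => if x \in S then Fin 0 else A x j
  | None, Some y => if y == i then Fin 1 else Fin 0
  | None, None => Fin 0
  end.

Definition e0 : gE (mg A) := medge (elt0 hji).
Definition pO (e : gE (mg A)) : 'I_2 := if e == e0 then ord0 else ord_max.
Definition fO (w : ('I_n + 'I_2)%type) : option 'I_n :=
  match w with inl x => Some x | inr a => if a == ord0 then None else Some j end.

Lemma ord2 (a : 'I_2) : a = ord0 \/ a = ord_max.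
Proof. case: a => [[|[|m]] h]; [left|right|by []]; exact: val_inj. Qed.

Lemma stepO : moveO (mg A) (mg (B set0)).
Proof.
exists j, 2, pO; split.
  by case: (medge_ex hjj) => e [E _] hs; apply: (hs e).
split.
  move=> a; case: (ord2 a) => ->.
    by exists e0; rewrite /pO eqxx.
  exists (medge (elt0 hjj)); split => //; rewrite /pO; case: eqP => // E.
  by have /= /eqP := congr1 (@rng (mg A)) E; rewrite eq_sym (negbTE hij).
split.
  move=> a b ab; case: (ord2 a) => Ea; case: (ord2 b) => Eb; subst; try by [].
    left; exists [:: e0] => e _; rewrite /pO; case: eqP => [->|]; by [left|].
  right; exists [:: e0] => e _; rewrite /pO; case: eqP => [->|]; by [left|].
apply: (@iso_fib _ (B set0) (@osplit_pres (mg A) j 2 pO) fO (@pP_O (mg A) j 2 pO)).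
- case=> [x|a] [y|b] /=.
  + by move=> _ _ [] ->.
  + by move=> hx _; case: eqP => // _ [] E; rewrite E eqxx in hx.
  + by move=> _ hy; case: eqP => // _ [] E; rewrite -E eqxx in hy.
  + by move=> _ _; case: (ord2 a) => ->; case: (ord2 b) => -> //=.
- case=> [x|].
    case: (x =P j) => [->|hx].
      by exists (inr ord_max).
    by exists (inl x) => //; apply/eqP.
  by exists (inr ord0).
- case=> [x|a] [y|b] /= hx hy.
  + apply: ec_equi (pfib_O11 pO hx hy) _; apply: ec_eq (@ec_mg _ A x y) _.
    by rewrite /B in_set0 /base (negbTE hx); case: eqP => // ->.
  + apply: ec_equi (pfib_O12 pO b hx) _; apply: ec_eq (@ec_mg _ A x j) _.
    by case: (ord2 b) => -> /=; rewrite /B ?in_set0 // eq_sym (negbTE hij).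
  + apply: ec_equi (pfib_O21 pO a hy) _.
    have nE (Ey : y <> i) (e : fib (G:=mg A) j y) : (sval e == e0) = false.
      case: e => e /= /andP [/eqP E1 /eqP E2]; apply/eqP => E.
      by apply: Ey; rewrite -E2 E.
    case: (ord2 a) => ->.
      case: (y =P i) => [Ey|Ey].
        subst y.
        have h0 : (src e0 == j) && (rng e0 == i) by rewrite !eqxx.
        have h1 : pO (sval (exist _ e0 h0 : fib (G:=mg A) j i)) == ord0 by rewrite /pO eqxx.
        pose t1 : {e : fib (G:=mg A) j i | pO (sval e) == ord0} := exist (fun e : fib (G:=mg A) j i => pO (sval e) == ord0) _ h1.
        apply: ec_eq (@ec_one _ t1 _) _; last by rewrite /= eqxx.
        move=> [t ht]; apply: val_inj => /=; apply: val_inj => /=.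
        by move: ht; rewrite /pO; case: (sval t =P e0).
      apply: ec_eq (ec_sig_false _) _; last by rewrite /= (introF eqP Ey).
      by move=> t; rewrite /pO nE.
    case: (y =P i) => [Ey|Ey].
      subst y.
      have h0 : (src e0 == j) && (rng e0 == i) by rewrite !eqxx.
      pose t0 := exist _ e0 h0 : fib (G:=mg A) j i.
      apply: ec_equi (equi_sig_ext (Q := fun t => t != t0) _) _.
        move=> t; rewrite /pO; case: (sval t =P e0) => [E|E].
          by rewrite (_ : t = t0) ?eqxx //; exact: val_inj.
        by rewrite eqxx; apply/esym/eqP => E'; apply: E; rewrite E'.
      apply: ec_eq (ec_rem t0 (@ec_mg _ A j i)) _.
      by rewrite /= in_set0 eqxx /base eqxx.
    apply: ec_eq (ec_const (b := true) _ (@ec_mg _ A j y)) _.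
      by move=> t; rewrite /pO nE.
    by rewrite /= in_set0 (introF eqP Ey).
  + apply: ec_equi (@pfib_O22 (mg A) j _ pO a b) _.
    have nE (e : fib (G:=mg A) j j) : (sval e == e0) = false.
      case: e => e /= /andP [/eqP E1 /eqP E2]; apply/eqP => E.
      by move: hij; rewrite -E2 E eqxx.
    case: (ord2 a) => ->.
      apply: ec_eq (ec_sig_false _) _.
        by move=> t; rewrite /pO nE.
      by case: (ord2 b) => -> //=; rewrite eq_sym (negbTE hij).
    apply: ec_eq (ec_const (b := true) _ (@ec_mg _ A j j)) _.
      by move=> t; rewrite /pO nE.
    by case: (ord2 b) => -> /=; rewrite in_set0 // eq_sym (negbTE hij).
Qed.

Definition D (S : {set 'I_n}) (s : 'I_n) (X Y : option (option 'I_n)) : enat :=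
  match X, Y with
  | Some (Some x), Some (Some y) => B S (Some x) (Some y)
  | Some (Some x), Some None => if x == s then Fin 0 else B S (Some x) None
  | Some (Some x), None => if x == s then B S (Some x) None else Fin 0
  | _, Some (Some y) => if y == i then Fin 1 else Fin 0
  | _, _ => Fin 0
  end.

Lemma B_row S (y : option 'I_n) : B S None y = if y == Some i then Fin 1 else Fin 0.
Proof. by case: y. Qed.

Lemma D_row S s (y : option (option 'I_n)) :
  D S s None y = if y == Some (Some i) then Fin 1 else Fin 0.
Proof. by case: y => [[y|]|]. Qed.

Section StepI.
Variables (S : {set 'I_n}) (s t : 'I_n).
Hypotheses (hs : s \notin S) (hsj : A s j <> Fin 0) (ht : t \notin S) (htj : A t j <> Fin 0)
  (hst : t != s).

Definition qI (e : gE (mg (B S))) : 'I_2 := if src e == Some s then ord0 else ord_max.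
Definition fI (w : (option 'I_n + 'I_2)%type) : option (option 'I_n) :=
  match w with inl X => Some X | inr a => if a == ord0 then None else Some None end.

Lemma stepI : moveI (mg (B S)) (mg (D S s)).
Proof.
exists None, 2, qI; split; first exact: (one_regular (B_row S)).
split.
  have : B S (Some s) None <> Fin 0 by rewrite /= (negbTE hs).
  by case/medge_ex => e [_ E] hso; apply: (hso e).
split.
  move=> a; case: (ord2 a) => ->.
    have : B S (Some s) None <> Fin 0 by rewrite /= (negbTE hs).
    by case/medge_ex => e [E1 E2]; exists e; rewrite /qI E1 E2 eqxx.
  have : B S (Some t) None <> Fin 0 by rewrite /= (negbTE ht).
  case/medge_ex => e [E1 E2]; exists e; rewrite /qI E1 E2; split => //.
  by case: eqP => // [[E]]; move: hst; rewrite E eqxx.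
apply: (@iso_fib _ (D S s) (@isplit_pres (mg (B S)) None 2 qI) fI (@pP_I (mg (B S)) None 2 qI)).
- case=> [X|a] [Y|b] /=.
  + by move=> _ _ [] ->.
  + by move=> hx _; case: eqP => // _ [] E; rewrite E in hx.
  + by move=> _ hy; case: eqP => // _ [] E; rewrite -E in hy.
  + by move=> _ _; case: (ord2 a) => ->; case: (ord2 b) => -> //=.
- case=> [[x|]|].
  + by exists (inl (Some x)).
  + by exists (inr ord_max).
  + by exists (inr ord0).
- case=> [X|a] [Y|b] /= hx hy.
  + apply: ec_equi (pfib_I11 qI hx hy) _; apply: ec_eq (@ec_mg _ (B S) X Y) _.
    by case: X hx => // x; case: Y hy.
  + apply: ec_equi (pfib_I12 qI b hx) _.
    case: X hx => // x _.
    apply: ec_eq (ec_const (b := if x == s then b == ord0 else b == ord_max) _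
       (@ec_mg _ (B S) (Some x) None)) _.
      move=> e; rewrite /qI; case: e => e /= /andP [/eqP -> _].
      case: (x =P s) => [->|E]; rewrite ?eqxx //.
      have -> : (Some x == Some s) = false by apply/eqP => [[]].
      by rewrite eq_sym.
    by case: (ord2 b) => ->; case: (x =P s) => //=.
  + apply: ec_equi (pfib_I21 qI a hy) _; apply: ec_eq (@ec_mg _ (B S) None Y) _.
    by case: Y hy => // y _; case: (ord2 a) => -> //=.
  + apply: ec_equi (@pfib_I22 (mg (B S)) None _ qI a b) _.
    apply: ec_eq (ec_empty _) _.
      case=> [[e /andP [/eqP E1 /eqP E2]] _].
      by have := @medge_nz _ (B S) e; rewrite E1 E2.
    by case: (ord2 a) => ->; case: (ord2 b) => ->.
Qed.

Definition fR (X : option (option 'I_n)) : option 'I_n :=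
  match X with Some Y => Y | None => None end.

Lemma stepR1 : moveR (mg (D S s)) (mg (B (s |: S))).
Proof.
have hrow := D_row S s.
exists None, (fone hrow), (Some (Some s)).
have rf : rng (fone hrow) <> None by [].
split; first exact: (one_regular hrow).
split; first exact: one_src.
split; first exact: rf.
split.
  move=> e E; have := @medge_nz _ (D S s) e; rewrite E.
  by case: (src e) => [[x|]|] //=; case: eqP => [->|].
apply: (@iso_fib _ (B (s |: S)) (@R_pres (mg (D S s)) None (fone hrow)) fR
   (pP_R (@one_src _ _ _ _ hrow) rf)).
- by case=> [X|] [Y|] //= _ _ ->.
- by move=> X; exists (Some X).
- case=> [X|] [Y|] //= _ _.
  apply: ec_equi (@pfib_R (mg (D S s)) None (fone hrow) (Some X) (Some Y) isT isT) _.
  apply: ec_eq (ec_sum (@ec_mg _ (D S s) (Some X) (Some Y))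
    (ec_const (b := Some (Some i) == Some Y) (fun _ => erefl) (@ec_mg _ (D S s) (Some X) None))) _.
  case: X => [x|]; case: Y => [y|] /=; rewrite ?eqSome.
  + rewrite in_setU1; case: (x =P s) => [->|xs] /=.
      rewrite (negbTE hs); case: (y =P i) => [->|yi] /=; first by rewrite eqxx.
      by rewrite eq_sym (introF eqP yi) eadd0.
    case: (y =P i) => [->|yi] /=; first by rewrite eqxx eadd0.
    by rewrite eq_sym (introF eqP yi) eadd0.
  + by rewrite in_setU1 eadd0; case: (x =P s) => [->|xs].
  + by rewrite if_same eadd0.
  + by [].
Qed.
End StepI.

Definition Ap := col_add_move A i j.

Lemma esub1_add a b : a <> Fin 0 -> eadd (esub1 a) b = esub1 (eadd a b).
Proof. by case: a => // [[|x]] //; case: b. Qed.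

Lemma stepR2 S s0 : (forall x, B S (Some x) None <> Fin 0 -> x = s0) ->
  moveR (mg (B S)) (mgraph Ap).
Proof.
move=> hsrc.
have hrow := B_row S.
exists None, (fone hrow), (Some s0).
have rf : rng (fone hrow) <> None by [].
split; first exact: (one_regular hrow).
split; first exact: one_src.
split; first exact: rf.
split.
  move=> e E; have := @medge_nz _ (B S) e; rewrite E.
  by case: (src e) => [x|] //= /hsrc ->.
apply: (@iso_fib _ Ap (@R_pres (mg (B S)) None (fone hrow)) (fun X => if X is Some x then x else i)
   (pP_R (@one_src _ _ _ _ hrow) rf)).
- by case=> [X|] [Y|] //= _ _ ->.
- by move=> X; exists (Some X).
- case=> [x|] [y|] //= _ _.
  apply: ec_equi (@pfib_R (mg (B S)) None (fone hrow) (Some x) (Some y) isT isT) _.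
  apply: ec_eq (ec_sum (@ec_mg _ (B S) (Some x) (Some y))
    (ec_const (b := Some i == Some y) (fun _ => erefl) (@ec_mg _ (B S) (Some x) None))) _.
  rewrite /= /Ap /col_add_move.
  case: (y =P i) => [->|yi] /=.
    rewrite eqxx /base; case: (x =P j) => [->|xj].
      by case: (j \in S); rewrite ?eadd0 esub1_add.
    by case: (x \in S); rewrite ?eadd0.
  by rewrite eqSome eq_sym (introF eqP yi) eadd0.
Qed.
Definition isnz (a : enat) := if a is Fin 0 then false else true.
Lemma isnzP a : reflect (a <> Fin 0) (isnz a).
Proof. by case: a => [[|x]|] /=; constructor. Qed.

Definition TT (S : {set 'I_n}) := [set x | (x \notin S) && isnz (A x j)].

Lemma mv_I G E : moveI G E -> move_equiv G E.
Proof. by move=> h; apply: rst_step; right; right; right. Qed.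
Lemma mv_R G E : moveR G E -> move_equiv G E.
Proof. by move=> h; apply: rst_step; right; left. Qed.
Lemma mv_O G E : moveO G E -> move_equiv G E.
Proof. by move=> h; apply: rst_step; right; right; left. Qed.

Lemma chain m S : #|TT S| <= m -> move_equiv (mg (B S)) (mgraph Ap).
Proof.
elim: m S => [|m IH] S hm.
- apply: mv_R; apply: (@stepR2 S i) => x /=; case: ifP => // xS Ax.
  have : x \in TT S by rewrite inE xS; apply/isnzP.
  by rewrite (card0_eq _) //; move: hm; rewrite leqn0 => /eqP.
- case: (leqP #|TT S| 1) => h1.
    case: (pickP (mem (TT S))) => [s0 hs0|h0].
      apply: mv_R; apply: (@stepR2 S s0) => x /=; case: ifP => // xS Ax.
      have hx : x \in TT S by rewrite inE xS; apply/isnzP.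
      by move/card_le1_eqP: h1 => /(_ x s0 hx hs0).
    apply: mv_R; apply: (@stepR2 S i) => x /=; case: ifP => // xS Ax.
    have : x \in TT S by rewrite inE xS; apply/isnzP.
    by move/(_ x) in h0; rewrite /= in h0; rewrite h0.
  case/card_gt1P: h1 => s [t [hs ht hst]].
  move: (hs) (ht); rewrite !inE => /andP [hsS /isnzP hsj] /andP [htS /isnzP htj].
  apply: rst_trans (mv_I (@stepI S s t hsS hsj htS htj _)) _.
    by rewrite eq_sym.
  apply: rst_trans (mv_R (@stepR1 S s hsS)) _.
  apply: IH.
  have : TT (s |: S) \proper TT S.
    apply/properP; split.
      by apply/subsetP => x; rewrite !inE negb_or => /andP [/andP [_ ->] ->].
    by exists s => //; rewrite !inE eqxx.
  move/proper_card => h; rewrite -ltnS; exact: leq_trans h hm.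
Qed.

Lemma mequiv_main : mequiv A Ap.
Proof.
rewrite /mequiv.
apply: rst_trans (mv_O stepO) _.
exact: (@chain #|TT set0| set0).
Qed.
End Main.


Lemma sc_mono (V : finType) (M M' : V -> V -> enat) :
  (forall x y, M x y <> Fin 0 -> M' x y <> Fin 0) ->
  strongly_connected (mg M) -> strongly_connected (mg M').
Proof.
move=> hM hs x y; move: (hs x y); elim => {x y} [x y [e [E1 E2]]| x | x y z _ IH1 _ IH2].
- apply: rt_step; apply: medge_ex; apply: hM; rewrite -E1 -E2; exact: medge_nz.
- exact: rt_refl.
- exact: rt_trans IH1 IH2.
Qed.

Theorem lemma7p2 (n : nat) (A : 'I_n -> 'I_n -> enat)
  (hdiag : forall k : 'I_n, A k k <> Fin 0)
  (i j : 'I_n) (hij : i != j) (hji : A j i <> Fin 0) :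
  let A' := col_add_move A i j in
  mequiv A A' /\
  (forall k : 'I_n, A' k k <> Fin 0) /\
  (irreducible A -> irreducible A') /\
  (forall (m : nat) (hm : (m <= n)%N),
      irreducible (corner hm A) -> irreducible (corner hm A')).
Proof.
move=> A'.
have nz x y : A x y <> Fin 0 -> A' x y <> Fin 0.
  rewrite /A' /col_add_move; case: (y =P i) => [->|] // h.
  case: (x =P j) => [->|_].
    by move: (hdiag j) hji; case: (A j i) => [[|a]|]; case: (A j j) => [[|b]|] //=; rewrite addnS.
  by move: h; case: (A x i) => [[|a]|]; case: (A x j).
split; first exact: (@mequiv_main n A i j hij hji (hdiag j)).
split.
  move=> k; apply: nz; exact: hdiag.
split.
  exact: sc_mono.
move=> m hm; apply: sc_mono => x y; exact: nz.
Qed.
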